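(* Let $P=(U,R)$ be a partial order with $U=\{u_1,\dots,u_n\}$, let $V=\{v_1,\dots,v_n\}$, and let $E_0=\{u_iv_i: 1\le i\le n\}$. The following are equivalent: (a) $P=P_1\cap P_2$ for some linear order $P_1$ and some interval order $P_2$ on $U$; (b) there exist two partial orders $P_1,P_2$ on $U$ such that $\widehat{C}(P)=\widehat{NC}(P_1)\cup\widehat{C}(P_2)$ and both $\widehat{NC}(P_1)$ and $\widehat{C}(P_2)$ are chain graphs; (c) $\widehat{C}(P)$ is linear-interval coverable, i.e. $\widehat{C}(P)=G_1\cup G_2$ for two chain graphs $G_1=(U,V,E_1)$ and $G_2=(U,V,E_2)$ with $E_0\subseteq E_2\setminus E_1$.
   Context: For a partial order $Q$ on $U=\{u_1,\dots,u_n\}$ and a disjoint copy $V=\{v_1,\dots,v_n\}$: the domination bipartite graph $C(Q)=(U,V,E)$ has $u_iv_j\in E$ iff $u_i<_Q u_j$; the bipartite graph $NC(Q)=(U,V,E')$ has $u_iv_j\in E'$ iff $u_i\le_Q u_j$ (i.e. $u_i<_Q u_j$ or $i=j$). For a bipartite graph $B=(U,V,F)$, its bipartite complement is $\widehat{B}=(U,V,\widehat F)$ where, for $u\in U,v\in V$, $uv\in\widehat F$ iff $uv\notin F$. For graphs on the same vertex set, $G_1\cup G_2$ denotes the graph with the union of the edge sets. A bipartite graph $(U,V,F)$ is a chain graph if for any two vertices in the same color class one neighborhood contains the other. A linear order is a partial order in which any two distinct elements are comparable; an interval order is a partial order whose elements can be assigned real intervals $I_x$ so that $x<y$ iff $I_x$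 lies entirely to the left of $I_y$; $P_1\cap P_2$ is the order whose relation is the intersection of the relations. *)

(* Defs.v *)
From Stdlib Require Import Reals.
From mathcomp Require Import all_boot.
Set Implicit Arguments. Unset Strict Implicit. Unset Printing Implicit Defensive.

(* Ground set U = {u_1..u_n} is 'I_n; V = {v_1..v_n} is a disjoint copy, also
   indexed by 'I_n. A partial order on U is given by its reflexive relation le. *)
Definition partial_order n (le : rel 'I_n) : Prop :=
  [/\ forall x, le x x,
      forall x y, le x y -> le y x -> x = y &
      forall x y z, le x y -> le y z -> le x z].

Definition ltP n (le : rel 'I_n) : rel 'I_n := fun x y => le x y && (x != y).

Definition linear_order n (le : rel 'I_n) : Prop :=
  partial_order le /\ forall x y, x != y -> le x y || le y x.

Definition interval_order n (le : rel 'I_n) : Prop :=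
  partial_order le /\
  exists (l r : 'I_n -> R),
    (forall x, Rle (l x) (r x)) /\
    (forall x y, ltP le x y <-> Rlt (r x) (l y)).

(* bipartite graphs (U,V,F): F i j means u_i v_j is an edge *)
Definition Cgraph n (le : rel 'I_n) : rel 'I_n := fun i j => ltP le i j.
Definition NCgraph n (le : rel 'I_n) : rel 'I_n := fun i j => le i j.
Definition bcompl n (F : rel 'I_n) : rel 'I_n := fun i j => ~~ F i j.
Definition gunion n (F1 F2 : rel 'I_n) : rel 'I_n := fun i j => F1 i j || F2 i j.

Definition chain_graph n (F : rel 'I_n) : Prop :=
  (forall i i', (forall j, F i j -> F i' j) \/ (forall j, F i' j -> F i j)) /\
  (forall j j', (forall i, F i j -> F i j') \/ (forall i, F i j' -> F i j)).

Definition order_inter n (le le1 le2 : rel 'I_n) : Prop :=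
  forall x y, le x y = le1 x y && le2 x y.

Definition same_graph n (F G : rel 'I_n) : Prop := forall i j, F i j = G i j.

(* Main.v *)
Require Import Defs.
From Stdlib Require Import Reals Lra.
From mathcomp Require Import all_boot.
From mathcomp Require Import zify.
Set Implicit Arguments. Unset Strict Implicit. Unset Printing Implicit Defensive.

Lemma ferrers n (F : rel 'I_n) : chain_graph F ->
  forall x y z w, F x y -> F z w -> F x w || F z y.
Proof.
case=> Hr _ x y z w Fxy Fzw.
case: (Hr x z) => H.
- by rewrite (H _ Fxy) orbT.
- by rewrite (H _ Fzw).
Qed.

Lemma chain_compl n (F : rel 'I_n) : chain_graph F -> chain_graph (bcompl F).
Proof.
case=> Hr Hc; split.
- move=> i i'; case: (Hr i i') => H; [right|left] => j; rewrite /bcompl;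
  apply: contra; exact: H.
- move=> j j'; case: (Hc j j') => H; [right|left] => i; rewrite /bcompl;
  apply: contra; exact: H.
Qed.

Lemma chain_ext n (F G : rel 'I_n) : (forall i j, F i j = G i j) ->
  chain_graph F -> chain_graph G.
Proof.
move=> E [Hr Hc]; split.
- move=> i i'; case: (Hr i i') => H; [left|right] => j; rewrite -!E; exact: H.
- move=> j j'; case: (Hc j j') => H; [left|right] => i; rewrite -!E; exact: H.
Qed.

Lemma lin_chain n (le1 : rel 'I_n) : linear_order le1 ->
  chain_graph (bcompl (NCgraph le1)).
Proof.
case=> [[Hrefl Hanti Htr] Hlin]; rewrite /bcompl /NCgraph.
have Hc : forall x y, le1 x y || le1 y x.
  move=> x y; case: (eqVneq x y) => [->|ne]; [by rewrite Hrefl | exact: Hlin].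
split.
- move=> i i'; case/orP: (Hc i i') => H; [left|right] => j; apply: contra => Hj.
  + exact: Htr H Hj.
  + exact: Htr H Hj.
- move=> j j'; case/orP: (Hc j j') => H; [right|left] => i; apply: contra => Hi.
  + exact: Htr Hi H.
  + exact: Htr Hi H.
Qed.

Lemma chain_lin n (le1 : rel 'I_n) : partial_order le1 ->
  chain_graph (bcompl (NCgraph le1)) -> linear_order le1.
Proof.
move=> Hp [Hr _]; split; first exact: Hp.
move=> x y ne; case: Hp => Hrefl _ _.
apply/negPn/negP; rewrite negb_or => /andP [h1 h2].
case: (Hr x y) => H.
- by move: (H y h1); rewrite /bcompl /NCgraph Hrefl.
- by move: (H x h2); rewrite /bcompl /NCgraph Hrefl.
Qed.

Lemma interval_chain n (le2 : rel 'I_n) : interval_order le2 ->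
  chain_graph (bcompl (Cgraph le2)).
Proof.
case=> _ [l [r [_ H]]]; rewrite /bcompl /Cgraph.
have E : forall i j, ~~ Defs.ltP le2 i j <-> Rle (l j) (r i).
  move=> i j; split.
  - move=> h; apply: Rnot_lt_le => h'; move: h; by rewrite (proj2 (H i j) h').
  - move=> h; apply/negP => h'; move/H: h' => h'; lra.
split.
- move=> i i'; case: (Rle_lt_dec (r i) (r i')) => h; [left|right] => j /E hj;
  apply/E; lra.
- move=> j j'; case: (Rle_lt_dec (l j') (l j)) => h; [left|right] => i /E hj;
  apply/E; lra.
Qed.

Lemma lt_trans_po n (le : rel 'I_n) : partial_order le ->
  forall x y z, Defs.ltP le x y -> Defs.ltP le y z -> Defs.ltP le x z.
Proof.
case=> _ Hanti Htr x y z /andP [h1 n1] /andP [h2 n2]; apply/andP; split.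
  exact: Htr h1 h2.
apply/eqP => exz; subst z; by move: n1; rewrite (Hanti _ _ h1 h2) eqxx.
Qed.

Lemma chain_interval n (le2 : rel 'I_n) : partial_order le2 ->
  chain_graph (bcompl (Cgraph le2)) -> interval_order le2.
Proof.
move=> Hp [_ Hc]; split; first exact: Hp.
have lt_tr := lt_trans_po Hp.
have lt_irr : forall x, Defs.ltP le2 x x = false.
  by move=> x; rewrite /Defs.ltP eqxx andbF.
have nest : forall y z, (forall w, Defs.ltP le2 w y -> Defs.ltP le2 w z) \/
                        (forall w, Defs.ltP le2 w z -> Defs.ltP le2 w y).
  move=> y z; case: (Hc y z) => H; [right|left] => w; apply: contraLR; exact: H.
pose pre x := [set z | Defs.ltP le2 z x].
pose S x := [set w | [exists z, ~~ Defs.ltP le2 x z && Defs.ltP le2 w z]].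
exists (fun x => INR #|pre x|), (fun x => INR #|S x|); split.
- move=> x; apply: le_INR; apply/leP; apply: subset_leq_card; apply/subsetP => w.
  rewrite !inE => h; apply/existsP; exists x; by rewrite lt_irr h.
- move=> x y; split.
  + move=> hxy; apply: lt_INR; apply/ssrnat.ltP; apply: proper_card; apply/properP; split.
    * apply/subsetP => w; rewrite !inE => /existsP [z /andP [nz wz]].
      case: (nest z y) => H; first exact: H.
      by move: nz; rewrite (H _ hxy).
    * exists x; rewrite !inE //; apply/existsP => [[z /andP [nz xz]]].
      by rewrite xz in nz.
  + move=> h; apply/negPn/negP => nh; apply: (Rlt_not_le _ _ h).
    apply: le_INR; apply/leP; apply: subset_leq_card; apply/subsetP => w.
    rewrite !inE => hw; apply/existsP; exists y; by rewrite nh hw.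
Qed.

Lemma lex_linear n (k : 'I_n -> nat) :
  linear_order (fun x y : 'I_n => (k x < k y) || ((k x == k y) && (x <= y))).
Proof.
split; first split.
- by move=> x; rewrite eqxx leqnn orbT.
- move=> x y /orP [h1|/andP [/eqP h1 h2]] /orP [h3|/andP [/eqP h3 h4]];
    try (exfalso; lia).
  apply: val_inj; apply/eqP; by rewrite eqn_leq h2 h4.
- move=> x y z /orP [h1|/andP [/eqP h1 h2]] /orP [h3|/andP [/eqP h3 h4]]; apply/orP.
  + left; lia.
  + left; lia.
  + left; lia.
  + right; rewrite h1 h3 eqxx /=; exact: leq_trans h2 h4.
- move=> x y ne; case: (ltngtP (k x) (k y)) => h //=; by rewrite ?orbT ?leq_total.
Qed.

Theorem theorem5 (n : nat) (le : rel 'I_n) :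
  partial_order le ->
  let A := exists le1 le2 : rel 'I_n,
      linear_order le1 /\ interval_order le2 /\ order_inter le le1 le2 in
  let B := exists le1 le2 : rel 'I_n,
      partial_order le1 /\ partial_order le2 /\
      same_graph (bcompl (Cgraph le))
                 (gunion (bcompl (NCgraph le1)) (bcompl (Cgraph le2))) /\
      chain_graph (bcompl (NCgraph le1)) /\ chain_graph (bcompl (Cgraph le2)) in
  let C := exists E1 E2 : rel 'I_n,
      same_graph (bcompl (Cgraph le)) (gunion E1 E2) /\
      chain_graph E1 /\ chain_graph E2 /\
      (forall i, E2 i i && ~~ E1 i i) in
  (A <-> B) /\ (B <-> C).
Proof.
move=> Hp; cbv zeta; split; split.
- case=> le1 [le2 [Hl1 [Hi2 Hint]]]; exists le1, le2.
  split; first exact: Hl1.1.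
  split; first exact: Hi2.1.
  split.
    move=> i j; rewrite /bcompl /Cgraph /gunion /NCgraph /Defs.ltP Hint.
    by case: (le1 i j); case: (le2 i j); case: (i != j).
  split; [exact: lin_chain | exact: interval_chain].
- case=> le1 [le2 [Hp1 [Hp2 [Hs [Hc1 Hc2]]]]]; exists le1, le2.
  split; first exact: chain_lin.
  split; first exact: chain_interval.
  move=> x y; have := Hs x y; rewrite /bcompl /Cgraph /gunion /NCgraph /Defs.ltP.
  case: Hp => r0 _ _; case: Hp1 => r1 _ _; case: Hp2 => r2 _ _.
  case: (eqVneq x y) => [<-|ne]; first by rewrite r0 r1 r2.
  rewrite !andbT => H; apply: negb_inj; by rewrite H negb_and.
- case=> le1 [le2 [Hp1 [Hp2 [Hs [Hc1 Hc2]]]]].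
  exists (bcompl (NCgraph le1)), (bcompl (Cgraph le2)).
  split; first exact: Hs.
  split; first exact: Hc1.
  split; first exact: Hc2.
  move=> i; rewrite /bcompl /NCgraph /Cgraph /Defs.ltP eqxx andbF /= negbK.
  case: Hp1 => r1 _ _; by rewrite r1.
- case=> E1 [E2 [Hs [Hc1 [Hc2 Hd]]]].
  have Hsame : forall i j, ~~ Defs.ltP le i j = E1 i j || E2 i j.
    move=> i j; exact: Hs i j.
  have Hp' := Hp; case: Hp' => Hrefl Hanti Htr.
  have ltle : forall x y, Defs.ltP le x y -> le x y by move=> x y /andP [].
  have lt_tr := lt_trans_po Hp.
  have noE1 : forall b c, le b c -> ~~ E1 b c.
    move=> b c h; case: (eqVneq b c) => [<-|ne]; first by case/andP: (Hd b).
    have hl : Defs.ltP le b c by rewrite /Defs.ltP h ne.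
    have := Hsame b c; rewrite hl /= => /esym/negbT/norP [] //.
  have fer1 := ferrers Hc1.
  pose T x y := Defs.ltP le x y || [exists a, [exists b, le x a && E1 b a && le b y]].
  have T_trans : forall x y z, T x y -> T y z -> T x z.
    move=> x y z /orP [hxy|/existsP [a /existsP [b /andP [/andP [xa ba] hby]]]]
                 /orP [hyz|/existsP [c /existsP [d /andP [/andP [yc dc] dz]]]].
    + apply/orP; left; exact: lt_tr hxy hyz.
    + apply/orP; right; apply/existsP; exists c; apply/existsP; exists d.
      by rewrite (Htr _ _ _ (ltle _ _ hxy) yc) dc dz.
    + apply/orP; right; apply/existsP; exists a; apply/existsP; exists b.
      by rewrite xa ba (Htr _ _ _ hby (ltle _ _ hyz)).
    + apply/orP; right; apply/existsP; exists a; apply/existsP; exists d.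
      rewrite xa dz andbT /=.
      case/orP: (fer1 b a d c ba dc) => h //.
      by move: (noE1 b c (Htr _ _ _ hby yc)); rewrite h.
  have T_irr : forall x, T x x = false.
    move=> x; apply/negbTE; rewrite negb_or; apply/andP; split.
      by rewrite /Defs.ltP eqxx andbF.
    apply/existsPn => a; apply/existsPn => b; apply/negP => /andP [/andP [xa ba] bx].
    by move: (noE1 _ _ (Htr _ _ _ bx xa)); rewrite ba.
  pose key x := #|[set z | T z x]|.
  have key_lt : forall x y, T x y -> key x < key y.
    move=> x y hxy; apply: proper_card; apply/properP; split.
      apply/subsetP => z; rewrite !inE => hz; exact: T_trans hz hxy.
    by exists x; rewrite !inE ?T_irr.
  pose le1 : rel 'I_n := fun x y => (key x < key y) || ((key x == key y) && (x <= y)).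
  pose le2 : rel 'I_n := fun x y => (x == y) || ~~ E2 x y.
  have diag : forall x, E2 x x by move=> x; case/andP: (Hd x).
  have ltle2 : forall x y, Defs.ltP le2 x y = ~~ E2 x y.
    move=> x y; rewrite /Defs.ltP /le2; case: (eqVneq x y) => [<-|ne].
      by rewrite diag.
    by rewrite andbT.
  have fer2 := ferrers (chain_compl Hc2).
  have Hl1 : linear_order le1 by exact: lex_linear.
  exists le1, le2.
  split; first exact: Hl1.1.
  split.
    split.
    + by move=> x; rewrite /le2 eqxx.
    + move=> x y; rewrite /le2 => /orP [/eqP //|h1] /orP [/eqP -> //|h2].
      by move: (fer2 _ _ _ _ h1 h2); rewrite /bcompl !diag.
    + move=> x y z; rewrite /le2 => /orP [/eqP -> //|h1] /orP [/eqP <- |h2].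
        by rewrite h1 orbT.
      by move: (fer2 _ _ _ _ h1 h2); rewrite /bcompl diag orbF => ->; rewrite orbT.
  split.
    move=> i j; rewrite /bcompl /Cgraph /gunion /NCgraph ltle2 negbK Hsame.
    case e2: (E2 i j); first by rewrite !orbT.
    rewrite !orbF; case h1: (E1 i j).
    + have hT : T j i.
        apply/orP; right; apply/existsP; exists j; apply/existsP; exists i.
        by rewrite h1 !Hrefl.
      have hk := key_lt _ _ hT.
      apply/esym/negP; rewrite /le1 => /orP [h|/andP [/eqP h _]]; lia.
    + have hl : Defs.ltP le i j.
        by apply/negPn; rewrite Hsame h1 e2.
      have hk := key_lt i j (introT orP (or_introl hl)).
      by rewrite /le1 hk.
  split; first exact: lin_chain.
  apply: (chain_ext _ Hc2) => i j; by rewrite /bcompl /Cgraph ltle2 negbK.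
Qed.
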